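(* Let $p$ be an odd prime and $G$ a finite non-abelian $2$-generated $p$-group with cyclic $G'$, with parameters and the fixed basis $(b_1,b_2)$ and $a=[b_2,b_1]$ as in the context. Then: (1) $\mathrm{Z}(G)\cap G'=\langle a^{p^{\max(o_1,o_2)}}\rangle$; (2) $\exp(G)=p^{\max(n_1+o'_1,n_2+o'_2)}$; (3) for $i\ge2$, $\gamma_i(G)=\langle a^{p^{(i-2)(m-\max(o_1,o_2))}}\rangle$, and the nilpotency class of $G$ is $1+\lceil m/(m-\max(o_1,o_2))\rceil$.
   Context: Conventions: $[x,y]=x^{-1}y^{-1}xy$, $x^y=y^{-1}xy$; $\gamma_i$ is the lower central series. Let $|G'|=p^m$, $G/G'\cong C_{p^{n_1}}\times C_{p^{n_2}}$, $n_1\ge n_2\ge1$. A basis is a pair $(b_1,b_2)$ with $G/G'=\langle b_1G'\rangle\times\langle b_2G'\rangle$ and $|b_iG'|=p^{n_i}$; $\mathcal{B}$ is the set of bases. For $g\in G$, $p^{o(g)}=|g{\rm C}_G(G')|$. $(o_1,o_2)=\min_{\mathrm{lex}}\{(o(b_1),o(b_2)):(b_1,b_2)\in\mathcal{B}\}$; $r_1=1+p^{m-o_1}$; $r_2=1+p^{m-o_2}$ if $o_2>o_1$, else $r_2=r_1^{p^{o_1-o_2}}$. $\mathcal{B}_r$ is the set of bases with $x^{b_i}=x^{r_i}$ for all $x\in G'$. For $b\in\mathcal{B}$, $|b_i|=p^{n_i+o'_i(b)}$ defines $o'_i(b)$; $(o'_1,o'_2)=\max_{\mathrm{lex}}\{(o'_1(b),o'_2(b)):b\in\mathcal{B}_r\}$.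 Fix $(b_1,b_2)\in\mathcal{B}_r$ with $(o'_1(b),o'_2(b))=(o'_1,o'_2)$ and put $a=[b_2,b_1]$ (a generator of $G'$, of order $p^m$). *)

(* Defs.v *)
From mathcomp Require Import all_boot all_fingroup all_solvable.
Set Implicit Arguments.
Unset Strict Implicit.
Unset Printing Implicit Defensive.
Import GroupScope.
Local Open Scope group_scope.

Section Params.
Variables (gT : finGroupType) (p : nat) (G : {group gT}).

Definition param_m : nat := logn p #|G^`(1)|.

(* G/G' ~ C_{p^n1} x C_{p^n2}, n1 >= n2:  p^n1 = exp(G/G'), p^(n1+n2) = |G/G'| *)
Definition param_n1 : nat := logn p (exponent (G / G^`(1))).
Definition param_n2 : nat := logn p #|G / G^`(1)| - param_n1.

Definition is_basis (b1 b2 : gT) : Prop :=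
  [/\ b1 \in G, b2 \in G,
      <[coset G^`(1) b1]> \x <[coset G^`(1) b2]> = G / G^`(1),
      #[coset G^`(1) b1] = (p ^ param_n1)%N
    & #[coset G^`(1) b2] = (p ^ param_n2)%N].

Definition o_of (g : gT) : nat := logn p #[coset 'C_G(G^`(1)) g].

Definition is_lexmin_o (o1 o2 : nat) : Prop :=
  (exists b1 b2, is_basis b1 b2 /\ o_of b1 = o1 /\ o_of b2 = o2) /\
  (forall b1 b2, is_basis b1 b2 ->
     (o1 < o_of b1)%N \/ (o1 = o_of b1 /\ (o2 <= o_of b2)%N)).

Definition r1_of (o1 : nat) : nat := (1 + p ^ (param_m - o1))%N.
Definition r2_of (o1 o2 : nat) : nat :=
  if (o1 < o2)%N then (1 + p ^ (param_m - o2))%N else (r1_of o1 ^ (p ^ (o1 - o2)))%N.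

Definition is_basis_r (o1 o2 : nat) (b1 b2 : gT) : Prop :=
  [/\ is_basis b1 b2,
      (forall x, x \in G^`(1) -> x ^ b1 = x ^+ r1_of o1)
    & (forall x, x \in G^`(1) -> x ^ b2 = x ^+ r2_of o1 o2)].

Definition o'1_of (b1 : gT) : nat := logn p #[b1] - param_n1.
Definition o'2_of (b2 : gT) : nat := logn p #[b2] - param_n2.

Definition is_lexmax_o' (o1 o2 o'1 o'2 : nat) : Prop :=
  (exists b1 b2, is_basis_r o1 o2 b1 b2 /\ o'1_of b1 = o'1 /\ o'2_of b2 = o'2) /\
  (forall b1 b2, is_basis_r o1 o2 b1 b2 ->
     (o'1_of b1 < o'1)%N \/ (o'1_of b1 = o'1 /\ (o'2_of b2 <= o'2)%N)).

End Params.

Definition ceil_div (a b : nat) : nat := (a + b - 1) %/ b.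

(* Main.v *)
Require Import Defs.
From mathcomp Require Import all_boot all_fingroup all_solvable.
From mathcomp Require Import zify ssralg ring.
Import GroupScope.
Local Open Scope nat_scope.
Fixpoint Ssum (b n : nat) : nat := if n is n'.+1 then b * Ssum b n' + 1 else 0.
Fixpoint Ff (a b n : nat) : nat := if n is n'.+1 then b * (Ssum b n' + a * Ff a b n') else 0.

Lemma Ssum_add b n m : Ssum b (n + m) = b ^ m * Ssum b n + Ssum b m.
Proof.
elim: m => [|m IH]; first by rewrite /= !addn0 expn0 mul1n.
rewrite addnS /= IH expnS. ring.
Qed.

Lemma Ssum_mul b n k : Ssum b (n * k) = Ssum b n * Ssum (b ^ n) k.
Proof.
elim: k => [|k IH]; first by rewrite muln0 /= muln0.
by rewrite mulnS addnC Ssum_add IH /=; ring.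
Qed.

Lemma Ff_add a b n m :
  Ff a b (n + m) = b ^ m * Ssum b n * Ssum a m + (a * b) ^ m * Ff a b n + Ff a b m.
Proof.
elim: m => [|m IH]; first by rewrite /= addn0 !expn0 !muln0 mul1n !addn0.
by rewrite addnS /= Ssum_add IH !expnS; ring.
Qed.

Lemma mulmod p x x' y y' : x = x' %[mod p] -> y = y' %[mod p] -> x * y = x' * y' %[mod p].
Proof. by move=> H1 H2; rewrite -modnMm H1 H2 modnMm. Qed.
Lemma addmod p x x' y y' : x = x' %[mod p] -> y = y' %[mod p] -> x + y = x' + y' %[mod p].
Proof. by move=> H1 H2; rewrite -modnDm H1 H2 modnDm. Qed.

Section NT.
Variable p : nat.
Hypothesis pr : prime p.
Hypothesis op : odd p.

Lemma Ssum_modp b n : b = 1 %[mod p] -> Ssum b n = n %[mod p].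
Proof.
move=> Hb; elim: n => [|n IH] //=.
rewrite -[n.+1]addn1; apply: addmod => //.
by rewrite -[n in _ = n %[mod _]]mul1n; apply: mulmod.
Qed.

Lemma Ssum_dvdp b : b = 1 %[mod p] -> p %| Ssum b p.
Proof. by move=> Hb; rewrite /dvdn Ssum_modp // modnn. Qed.

Lemma exp_mod1 b k : b = 1 %[mod p] -> b ^ k = 1 %[mod p].
Proof. by move=> Hb; rewrite -modnXm Hb modnXm exp1n. Qed.

Lemma Ssum_pk b k : b = 1 %[mod p] -> p ^ k %| Ssum b (p ^ k).
Proof.
move=> Hb; elim: k => [|k IH]; first by rewrite dvd1n.
by rewrite expnSr Ssum_mul dvdn_mul // Ssum_dvdp // exp_mod1.
Qed.

Lemma Ff_modp a b n : a = 1 %[mod p] -> b = 1 %[mod p] ->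
  2 * Ff a b n = n * n.-1 %[mod p].
Proof.
move=> Ha Hb; elim: n => [|n IH] //=.
have -> : 2 * (b * (Ssum b n + a * Ff a b n)) = b * (2 * Ssum b n + a * (2 * Ff a b n)) by ring.
have -> : n.+1 * n = 1 * (2 * n + 1 * (n * n.-1)).
  by case: n {IH} => [|n] //=; ring.
apply: mulmod => //; apply: addmod; first by apply: mulmod => //; exact: Ssum_modp.
by apply: mulmod.
Qed.

Lemma Ff_dvdp a b : a = 1 %[mod p] -> b = 1 %[mod p] -> p %| Ff a b p.
Proof.
move=> Ha Hb.
have cp2 : coprime p 2 by rewrite coprime_sym coprime2n.
rewrite -(Gauss_dvdl _ cp2) mulnC /dvdn Ff_modp //.
by rewrite -modnMml modnn mul0n mod0n.
Qed.

Lemma mod_dvd_tr d N x y : d %| N -> x = y %[mod N] -> d %| y -> d %| x.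
Proof.
move=> dN H; rewrite /dvdn -(modn_dvdm x dN) H (modn_dvdm y dN); done.
Qed.

Lemma Ff_pk a b k : a = 1 %[mod p] -> b = 1 %[mod p] -> p ^ k %| Ff a b (p ^ k).
Proof.
move=> Ha Hb; elim: k => [|k IH]; first by rewrite dvd1n.
case: k IH => [|k] IH; first by rewrite expn1 Ff_dvdp.
set n := p ^ k.+1 in IH *.
have dSb : n %| Ssum b n by apply: Ssum_pk.
have dSa : n %| Ssum a n by apply: Ssum_pk.
have J : forall j, Ff a b (j * n) = Ff a b n * Ssum ((a * b) ^ n) j %[mod n * n].
  elim=> [|j IHj]; first by rewrite /= !muln0.
  rewrite mulSnr Ff_add.
  have [x Hx] := dvdnP dSa.
  rewrite [j * n]mulnC Ssum_mul.
  have [y Hy] := dvdnP dSb.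
  rewrite Hx Hy.
  have -> : b ^ n * (y * n * Ssum (b ^ n) j) * (x * n) = (b ^ n * y * Ssum (b ^ n) j * x) * (n * n) by ring.
  rewrite -addnA modnMDl.
  have -> : Ff a b n * Ssum ((a * b) ^ n) j.+1 = (a * b) ^ n * (Ff a b n * Ssum ((a * b) ^ n) j) + Ff a b n.
    by rewrite /=; ring.
  by apply: addmod => //; apply: mulmod => //; rewrite mulnC.
rewrite expnSr -/n [n * p]mulnC.
apply: (@mod_dvd_tr _ (n * n) _ _ _ (J p)).
  rewrite /n -expnS -expnD dvdn_Pexp2l ?prime_gt1 //; lia.
by rewrite [p * n]mulnC dvdn_mul //; apply: Ssum_dvdp; apply: exp_mod1; by rewrite -modnMm Ha Hb modnMm.
Qed.
End NT.

Local Open Scope group_scope.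
Section GF.
Variables (gT : finGroupType) (A : {group gT}).
Hypothesis abA : abelian A.
Variables (u v : gT) (al be : nat).
Hypothesis Hu : forall x, x \in A -> x ^ u = x ^+ al.
Hypothesis Hv : forall x, x \in A -> x ^ v = x ^+ be.
Hypothesis cA : [~ v, u] \in A.

Lemma comm_iter n : [~ v ^+ n, u] = [~ v, u] ^+ (Ssum be n).
Proof.
elim: n => [|n IH]; first by rewrite expg0 comm1g.
rewrite expgSr commMgJ IH conjXg Hv // /= -expgM expgD expg1; congr (_ * _).
Qed.

Lemma GF n : (u * v) ^+ n = u ^+ n * v ^+ n * [~ v, u] ^+ (Ff al be n).
Proof.
set c := [~ v, u].
elim: n => [|n IH]; first by rewrite !expg0 !mulg1.
have e1 k : c ^+ k * u = u * c ^+ (al * k) by rewrite conjgC conjXg Hu // expgM.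
have e2 : v ^+ n * u = u * v ^+ n * c ^+ (Ssum be n) by rewrite commgC comm_iter.
have e3 k : c ^+ k * v = v * c ^+ (be * k) by rewrite conjgC conjXg Hv // expgM.
rewrite expgSr IH /=.
rewrite -[RHS]mulgA -[_ * _ * c ^+ _ * (u * v)]mulgA [c ^+ _ * (u * v)]mulgA e1.
rewrite !mulgA -[u ^+ n * v ^+ n * u]mulgA e2 !mulgA -expgSr.
by rewrite -(mulgA (u ^+ n.+1 * v ^+ n)) -expgD -[LHS]mulgA e3 mulgA -(mulgA (u ^+ n.+1) (v ^+ n)) -expgSr.
Qed.
End GF.

Lemma gen_ind (gT : finGroupType) (X : {set gT}) (P : gT -> Prop) :
  P 1 -> (forall x y, P x -> P y -> P (x * y)) -> (forall x, x \in X -> P x) ->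
  forall g, g \in <<X>> -> P g.
Proof.
move=> P1 PM PX g /gen_prodgP[n [c cX ->]].
elim: n c cX => [|n IH] c cX; first by rewrite big_ord0.
by rewrite big_ord_recr /=; apply: PM; [apply: IH => i; apply: cX | apply: PX; apply: cX].
Qed.

Lemma nat_id1 P s t : ((1 + P * s) * (1 + P * t) = 1 + P * (t + s + P * t * s))%N.
Proof. ring. Qed.

Lemma nat_id2 N P t F : (N + P * t * (F * N) = N * (1 + P * t * F))%N.
Proof. ring. Qed.

Lemma ceil_facts m d : (0 < m -> 0 < d ->
  [/\ m <= ceil_div m d * d, ceil_div m d * d - d < m & 1 <= ceil_div m d])%N.
Proof.
move=> m0 d0; rewrite /ceil_div.
have := divn_eq (m + d - 1) d; have := ltn_pmod (m + d - 1) d0.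
set r := ((m + d - 1) %% d)%N; set C := ((m + d - 1) %/ d)%N.
move=> rd Hm.
have mX : (m <= C * d)%N by lia.
split => //; first by lia.
rewrite lt0n; apply/eqP => C0; move: mX; rewrite C0 mul0n; lia.
Qed.

Local Open Scope group_scope.

Theorem lemma3p5 (gT : finGroupType) (p : nat) (G : {group gT})
  (o1 o2 o'1 o'2 : nat) (b1 b2 : gT) :
  prime p -> odd p -> p.-group G -> ~~ abelian G ->
  (exists x y : gT, G :=: <<[set x; y]>>) ->
  cyclic G^`(1) ->
  is_lexmin_o p G o1 o2 ->
  is_lexmax_o' p G o1 o2 o'1 o'2 ->
  is_basis_r p G o1 o2 b1 b2 -> o'1_of p G b1 = o'1 -> o'2_of p G b2 = o'2 ->
  let m := param_m p G in
  let a := [~ b2, b1] in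
  [/\ 'Z(G) :&: G^`(1) = <[a ^+ (p ^ maxn o1 o2)%N]>,
      exponent G = (p ^ maxn (param_n1 p G + o'1) (param_n2 p G + o'2))%N,
      (forall i : nat, (2 <= i)%N ->
         'L_i(G) = <[a ^+ (p ^ ((i - 2) * (m - maxn o1 o2)))%N]>)
    & nil_class G = (1 + ceil_div m (m - maxn o1 o2))%N].
Proof.
move=> pr op pG nabG _ cycA _ _ Bb Ho1 Ho2 m a.
case: Bb => [[b1G b2G dpr ob1 ob2] act1 act2].
have sAG : G^`(1) \subset G := der_sub 1 G.
have nsAG : G^`(1) <| G := der_normal 1 G.
have nAG := normal_norm nsAG.
have pA : p.-group G^`(1) := pgroupS sAG pG.
have abA : abelian G^`(1) := cyclic_abelian cycA.
have p1 : (1 < p)%N := prime_gt1 pr.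
have aG : a \in G by rewrite groupR.
have aA : a \in G^`(1) by rewrite derg1 mem_commg.
have genG : <[b1]> <*> <[b2]> = G.
  apply: Phi_nongen; apply/eqP; rewrite eqEsubset join_subG Phi_sub /=.
  rewrite subUset !cycle_subG b1G b2G /=.
  have sGA : G \subset G^`(1) * (<[b1]> <*> <[b2]>).
    rewrite -quotientSK // quotientY ?cycle_subG ?(subsetP nAG) //.
    by rewrite !quotient_cycle ?(subsetP nAG) // (dprodWY dpr).
  apply: (subset_trans sGA); apply: mul_subG.
    by rewrite (subset_trans _ (joing_subl _ _)) // (Phi_joing pG) joing_subl.
  by apply: genS; rewrite subsetUr.
have cAa : <[a]> \subset G^`(1) by rewrite cycle_subG.
have nsaG : <[a]> <| G.
  by apply: (char_normal_trans _ nsAG); rewrite sub_cyclic_char.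
have defA : G^`(1) = <[a]>.
  apply/eqP; rewrite eqEsubset cAa andbT.
  apply: der1_min; first exact: normal_norm.
  rewrite -genG quotientY ?cycle_subG ?(subsetP (normal_norm nsaG)) //.
  rewrite !quotient_cycle ?(subsetP (normal_norm nsaG)) //.
  rewrite abelianY !cycle_abelian /= cent_cycle cycle_subG.
  apply/cent1P/commgP.
  by rewrite -morphR ?(subsetP (normal_norm nsaG)) //; apply/eqP; apply: coset_id; exact: cycle_id.
have cardA : #|G^`(1)| = (p ^ m)%N := card_pgroup pA.
have oa : #[a] = (p ^ m)%N by rewrite /order -defA.
have m_gt0 : (0 < m)%N.
  rewrite lt0n; apply: contra nabG => /eqP m0.
  by apply/derG1P/eqP; rewrite trivg_card1 cardA m0.
pose M := maxn o1 o2; pose d := (m - M)%N.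
pose ACT g := exists t, forall x, x \in G^`(1) -> x ^ g = x ^+ (1 + p ^ d * t)%N.
have ACT_mul : forall g h, ACT g -> ACT h -> ACT (g * h).
  move=> g h [t Ht] [s Hs]; exists (t + s + p ^ d * t * s)%N => x xA.
  by rewrite conjgM Ht // conjXg Hs // -expgM nat_id1.
have ACT1 : ACT 1 by exists 0%N => x _; rewrite conjg1 muln0 addn0 expg1.
have ACT_pow : forall g k, ACT g -> ACT (g ^+ k).
  move=> g k Hg; elim: k => [|k IH]; first by rewrite expg0.
  by rewrite expgSr; apply: ACT_mul.
have ACTb1 : ACT b1.
  have dle : (d <= m - o1)%N by rewrite leq_sub2l // leq_maxl.
  exists (p ^ (m - o1 - d))%N => x xA.
  by rewrite act1 // /r1_of -expnD subnKC.
have pow_b1 : forall k x, x \in G^`(1) -> x ^ (b1 ^+ k) = x ^+ (r1_of p G o1 ^ k)%N.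
  move=> k x xA; elim: k => [|k IH]; first by rewrite expg0 conjg1 expn0 expg1.
  by rewrite expgSr conjgM IH conjXg act1 // -expgM expnS.
have ACTb2 : ACT b2.
  case: (ltnP o1 o2) => o12.
    have dE : d = (m - o2)%N by rewrite /d /M (maxn_idPr (ltnW o12)).
    exists 1%N => x xA; rewrite act2 // /r2_of o12 muln1 dE //.
  have [t Ht] := ACT_pow b1 (p ^ (o1 - o2))%N ACTb1.
  exists t => x xA; rewrite act2 // /r2_of ltnNge o12 /= -Ht // pow_b1 //.
have ACT_G : forall g, g \in G -> ACT g.
  rewrite -genG; apply: gen_ind; [exact: ACT1 | exact: ACT_mul | move=> x].
  by case/setUP => /cycleP[i ->]; apply: ACT_pow.
have [bk bkG Hbk] : exists2 bk, bk \in G & forall x, x \in G^`(1) -> x ^ bk = x ^+ (1 + p ^ d)%N.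
  case: (ltnP o1 o2) => o12.
    exists b2 => // x xA; rewrite act2 // /r2_of o12 /d /M (maxn_idPr (ltnW o12)) //.
  exists b1 => // x xA; rewrite act1 // /r1_of /d /M (maxn_idPl o12) //.
have commcyc : forall y, y \in G^`(1) -> [~: <[y]>, G] = <[y ^+ (p ^ d)%N]>.
  move=> y yA; apply/eqP; rewrite eqEsubset; apply/andP; split.
    rewrite gen_subG; apply/subsetP => _ /imset2P[x g /cycleP[j ->] gG ->].
    have [t Ht] := ACT_G g gG.
    rewrite commgEl Ht ?groupX // add1n expgS mulKg.
    by rewrite -expgM mulnCA expgM mem_cycle.
  rewrite cycle_subG.
  have <- : [~ y, bk] = y ^+ (p ^ d)%N by rewrite commgEl Hbk // add1n expgS mulKg.
  by apply: mem_commg; [exact: cycle_id | exact: bkG].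
have Lfor : forall k, 'L_k.+2(G) = <[a ^+ (p ^ (k * d))%N]>.
  elim=> [|k IH]; first by rewrite lcn2 defA mul0n expn0 expg1.
  rewrite lcnSn IH commcyc; last by rewrite defA mem_cycle.
  by rewrite -expgM -expnD mulSn addnC.
have nilG := pgroup_nil pG.
have d_gt0 : (0 < d)%N.
  rewrite lt0n; apply/negP => /eqP d0.
  have L1 := elimT (lcn_nil_classP (nil_class G).+1 nilG) (leqnSn _).
  rewrite Lfor d0 muln0 expn0 expg1 in L1.
  by apply: (negP nabG); apply/derG1P; rewrite defA L1.
have part3 : forall i : nat, (2 <= i)%N -> 'L_i(G) = <[a ^+ (p ^ ((i - 2) * d))%N]>.
  by move=> i i2; rewrite -Lfor -[(i - 2).+2]addn2 subnK.
have Mlt : (M < m)%N by rewrite -subn_gt0.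
have Mm : (M + d = m)%N by rewrite /d subnKC // ltnW.
have part1 : 'Z(G) :&: G^`(1) = <[a ^+ (p ^ M)%N]>.
  apply/eqP; rewrite eqEsubset; apply/andP; split.
    apply/subsetP => x /setIP[xZ xA].
    case/centerP: xZ => _ cxG.
    have cx := cxG bk bkG.
    have xfix : x ^ bk = x by rewrite conjgE cx mulKg.
    rewrite Hbk // add1n expgS in xfix.
    have x1 : x ^+ (p ^ d)%N = 1 by apply: (mulgI x); rewrite xfix mulg1.
    rewrite defA in xA; case/cycleP: xA x1 => k ->.
    rewrite -expgM => /eqP; rewrite -order_dvdn oa.
    rewrite -Mm expnD dvdn_pmul2r ?expn_gt0 ?(ltnW p1) // => /dvdnP[j ->].
    by rewrite mulnC expgM mem_cycle.
  rewrite cycle_subG; apply/setIP; split; last by rewrite groupX.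
  apply/centerP; split; first by rewrite groupX.
  move=> g gG; have [t Ht] := ACT_G g gG.
  have zA : a ^+ (p ^ M)%N \in G^`(1) by rewrite groupX.
  have zp : (a ^+ (p ^ M)%N) ^+ (p ^ d)%N = 1 by rewrite -expgM -expnD Mm -oa expg_order.
  apply/commgP; apply/conjg_fixP.
  by rewrite Ht // add1n expgS expgM zp expg1n mulg1.
have ob : forall b, b \in G -> #[b] = (p ^ logn p #[b])%N.
  by move=> b bG; have [k ->] := p_natP (mem_p_elt pG bG); rewrite pfactorK.
have cdiv : forall b, b \in G -> #[coset G^`(1) b] %| #[b].
  by move=> b bG; rewrite order_dvdn -morphX ?(subsetP nAG) // expg_order morph1.
pose L1 := logn p #[b1]; pose L2 := logn p #[b2].
have nL1 : (param_n1 p G + o'1 = L1)%N.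
  rewrite -Ho1 /o'1_of subnKC // -(dvdn_Pexp2l _ _ p1) -ob1 -(ob b1 b1G); exact: cdiv.
have nL2 : (param_n2 p G + o'2 = L2)%N.
  rewrite -Ho2 /o'2_of subnKC // -(dvdn_Pexp2l _ _ p1) -ob2 -(ob b2 b2G); exact: cdiv.
have mod1 : forall t, (1 + p ^ d * t = 1 %[mod p])%N.
  move=> t; rewrite -(subnKC d_gt0) expnS addnC mulnAC -mulnA mulnC modnMDl //.
have abAP : forall x y, x \in G^`(1) -> y \in G^`(1) -> commute x y.
  by move=> x y xA yA; apply: (centsP abA).
  
have mL2 : (m <= L2)%N.
  have [t2 Ht2] := ACT_G b2 b2G.
  have Hv : forall x, x \in G^`(1) -> x ^ a = x ^+ 1.
    by move=> x xA; rewrite expg1 conjgE (abAP _ _ xA aA) mulKg.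
  have cA2 : [~ a, b2] \in G^`(1) by rewrite derg1 mem_commg.
  have := @GF _ _ b2 a _ _ Ht2 Hv cA2 (p ^ L2)%N.
  have b2q : b2 ^+ (p ^ L2)%N = 1 by rewrite -(ob b2 b2G) expg_order.
  rewrite -conjg_mulR -conjXg b2q conj1g mul1g.
  have [F' ->] := dvdnP (Ff_pk p pr op _ _ L2 (mod1 t2) (erefl _)).
  rewrite commgEl Ht2 // add1n expgS mulKg.
  rewrite -expgM -expgD nat_id2 => /esym/eqP; rewrite -order_dvdn oa Gauss_dvdl.
    by rewrite dvdn_Pexp2l.
  by rewrite coprime_pexpl // -coprime_modr -mulnA mod1 coprime_modr coprimen1.
pose E := maxn L1 L2; pose q := (p ^ E)%N.
have mE : (m <= E)%N := leq_trans mL2 (leq_maxr _ _).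
have POW : forall u v, u \in G -> v \in G -> (u * v) ^+ q = u ^+ q * v ^+ q.
  move=> u v uG vG.
  have [t Ht] := ACT_G u uG; have [s Hs] := ACT_G v vG.
  have cA : [~ v, u] \in G^`(1) by rewrite derg1 mem_commg.
  rewrite (@GF _ _ u v _ _ Ht Hs cA).
  have [F' ->] := dvdnP (Ff_pk p pr op _ _ E (mod1 t) (mod1 s)).
  have cq : [~ v, u] ^+ q = 1.
    apply/eqP; rewrite -order_dvdn (dvdn_trans (order_dvdG cA)) //.
    by rewrite cardA dvdn_Pexp2l.
  by rewrite mulnC expgM cq expg1n mulg1.
have bq : forall b, b \in G -> (logn p #[b] <= E)%N -> b ^+ q = 1.
  by move=> b bG lb; apply/eqP; rewrite -order_dvdn (ob b bG) dvdn_Pexp2l.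
have expG : forall g, g \in <[b1]> <*> <[b2]> -> g \in G /\ g ^+ q = 1.
  apply: gen_ind; first by rewrite group1 expg1n.
    move=> x y [xG xq] [yG yq]; split; first by rewrite groupM.
    by rewrite POW // xq yq mulg1.
  move=> x /setUP[] /cycleP[i ->]; rewrite groupX //.
    by rewrite expgAC bq ?expg1n ?leq_maxl.
  by rewrite expgAC bq ?expg1n ?leq_maxr.
have part2 : exponent G = q.
  apply/eqP; rewrite eqn_dvd; apply/andP; split.
    by apply/exponentP => g gG; have := expG g; rewrite genG => /(_ gG) [].
  rewrite /q /E; case: (leqP L2 L1) => L12.
    by rewrite /L1 -ob // dvdn_exponent.
  by rewrite /L2 -ob // dvdn_exponent.
have [Cd1 Cd2 C1] := ceil_facts m d m_gt0 d_gt0.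
set C := ceil_div m d in Cd1 Cd2 C1 *.
have nilC : nil_class G = (1 + C)%N.
  apply/anti_leq/andP; split.
    apply/(lcn_nil_classP _ nilG); rewrite add1n Lfor.
    suff -> : a ^+ (p ^ (C * d))%N = 1 by rewrite cycle1.
    by apply/eqP; rewrite -order_dvdn oa dvdn_Pexp2l.
  rewrite add1n ltnNge; apply/negP => /(lcn_nil_classP _ nilG).
  rewrite -(subnKC C1) add1n Lfor => /eqP; rewrite cycle_eq1 -order_dvdn oa dvdn_Pexp2l //.
  by rewrite mulnBl mul1n leqNgt Cd2.
split.
- exact: part1.
- by rewrite nL1 nL2.
- exact: part3.
- exact: nilC.
Qed.
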